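(* Let $k$ be a field and $A\in\operatorname{Mat}_{n\times n}(k)$ with index $i(A)=r\ge 1$. For $i\in\{1,\dots,r\}$ put $\nu_i(A)=n-\operatorname{rk}(A^i)$. Let $A\{GD\}$ be the set of G-Drazin inverses of $A$. Then there exists a bijection $$k^{\nu_1(A)\cdot\nu_r(A)}\times k^{\nu_r(A)-\nu_1(A)}\times k^{[\nu_1(A)-1][\nu_r(A)-\nu_1(A)]}\;\longrightarrow\;A\{GD\}.$$
   Context: The index $i(A)$ of a square matrix $A$ is the smallest integer $r\ge 0$ such that $\operatorname{rk}(A^{r})=\operatorname{rk}(A^{r+1})$. A matrix $X\in\operatorname{Mat}_{n\times n}(k)$ is a G-Drazin inverse of $A$ (with $r=i(A)$) if $AXA=A$ and $XA^{r}=A^{r}X$. *)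

(* Defs.v *)
From HB Require Import structures.
From mathcomp Require Import all_boot all_order all_algebra.
Set Implicit Arguments. Unset Strict Implicit. Unset Printing Implicit Defensive.
Import GRing.Theory.
Local Open Scope ring_scope.

Definition is_index (k : fieldType) (n : nat) (A : 'M[k]_n) (r : nat) : Prop :=
  \rank (A ^+ r) = \rank (A ^+ r.+1) /\
  (forall s : nat, (s < r)%N -> \rank (A ^+ s) <> \rank (A ^+ s.+1)).

Definition nu (k : fieldType) (n : nat) (A : 'M[k]_n) (i : nat) : nat :=
  (n - \rank (A ^+ i))%N.

Definition is_GDrazin (k : fieldType) (n : nat) (A : 'M[k]_n) (r : nat)
  (X : 'M[k]_n) : bool :=
  (A *m X *m A == A) && (X *m A ^+ r == A ^+ r *m X).

(* Main.v *)
Require Import Defs.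
From HB Require Import structures.
From mathcomp Require Import all_boot all_order all_algebra.
From mathcomp Require Import zify.
From Stdlib Require Import ClassicalEpsilon.
Set Implicit Arguments. Unset Strict Implicit. Unset Printing Implicit Defensive.
Import GRing.Theory.
Local Open Scope ring_scope.

Definition ob (U T : Type) (g : U -> T) (P : T -> Prop) :=
  injective g /\ (forall x, P x <-> exists u, g u = x).

Lemma ob_sig (U T : Type) (P : pred T) (g : U -> T) :
  ob g (fun x => P x) -> exists f : U -> {x | P x}, bijective f.
Proof.
case=> gi gP.
have gPu : forall u, P (g u) by move=> u; apply/gP; exists u.
exists (fun u => exist _ (g u) (gPu u)).
have surj : forall x : {x | P x}, exists u, g u = sval x.
  by case=> x Px /=; apply/gP.
exists (fun x => proj1_sig (constructive_indefinite_description _ (surj x))).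
  move=> u /=; case: constructive_indefinite_description => v /= /gi //.
move=> [x Px] /=; case: constructive_indefinite_description => v /= gv.
by subst x; congr exist; apply: bool_irrelevance.
Qed.

Lemma ob_compl (U U' T : Type) (g : U -> T) (P : T -> Prop) (h : U' -> U) :
  ob g P -> bijective h -> ob (g \o h) P.
Proof.
case=> gi gP [h' hK h'K]; split; first by apply: inj_comp => //; apply: can_inj hK.
move=> x; rewrite gP; split=> [[u <-]|[u <-]]; last by exists (h u).
by exists (h' u) => /=; rewrite h'K.
Qed.

Lemma ob_compr (U T T' : Type) (g : U -> T) (P : T -> Prop) (phi : T -> T')
  (P' : T' -> Prop) :
  ob g P -> injective phi -> (forall x, P' x <-> exists y, P y /\ phi y = x) ->
  ob (phi \o g) P'.
Proof.
case=> gi gP phii hP; split; first exact: inj_comp.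
move=> x; rewrite hP; split=> [[y [/gP [u <-] <-]]|[u <-]]; first by exists u.
by exists (g u); split=> //; apply/gP; exists u.
Qed.

Section Split.
Variable k : fieldType.
Lemma split3 (a b c a' b' c' : nat) : (a + b + c = a' + b' + c')%N ->
  exists h : 'rV[k]_a * 'rV[k]_b * 'rV[k]_c -> 'rV[k]_a' * 'rV[k]_b' * 'rV[k]_c',
    bijective h.
Proof.
move=> e.
pose j (a b c : nat) (t : 'rV[k]_a * 'rV[k]_b * 'rV[k]_c) := row_mx (row_mx t.1.1 t.1.2) t.2.
pose s (a b c : nat) (v : 'rV[k]_(a + b + c)) :=
  (lsubmx (lsubmx v), rsubmx (lsubmx v), rsubmx v).
have jK a1 b1 c1 : cancel (@j a1 b1 c1) (@s a1 b1 c1).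
  by case=> [[x y] z]; rewrite /j /s /= !row_mxKl !row_mxKr.
have sK a1 b1 c1 : cancel (@s a1 b1 c1) (@j a1 b1 c1).
  by move=> v; rewrite /j /s /= !hsubmxK.
exists (fun t => s _ _ _ (castmx (erefl 1%N, e) (j _ _ _ t))).
exists (fun t => s _ _ _ (castmx (esym (erefl 1%N), esym e) (j _ _ _ t))).
  by move=> t; rewrite sK castmxK jK.
by move=> t; rewrite sK castmxKV jK.
Qed.
End Split.

Section S.
Variable k : fieldType.

Lemma pid_ob (rho q : nat) :
  exists g : 'rV[k]_(rho * q) * 'rV[k]_(q * rho) * 'rV[k]_(q * q) -> 'M[k]_(rho + q),
    ob g (fun Z => (pid_mx rho : 'M_(rho + q)) *m Z *m (pid_mx rho : 'M_(rho + q)) = pid_mx rho).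
Proof.
exists (fun t => block_mx 1%:M (vec_mx t.1.1) (vec_mx t.1.2) (vec_mx t.2)).
have pidE : pid_mx rho = block_mx 1%:M 0 0 0 :> 'M[k]_(rho + q) by rewrite pid_mx_block.
split.
  move=> [[x y] z] [[x' y'] z'] /= /eq_block_mx [_ /(can_inj vec_mxK) -> /(can_inj vec_mxK) -> /(can_inj vec_mxK) ->] //.
move=> Z; rewrite pidE -[Z]submxK !mulmx_block !mulmx0 !mul0mx !mulmx1 !mul1mx !addr0.
split.
  move=> /eq_block_mx [-> _ _ _].
  by exists (mxvec (ursubmx Z), mxvec (dlsubmx Z), mxvec (drsubmx Z)); rewrite /= !mxvecK.
by case=> [[[x y] z]] /= /eq_block_mx [<- _ _ _].
Qed.

Lemma pid_ob' (p rho q : nat) : (rho + q = p)%N ->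
  exists g : 'rV[k]_(rho * q) * 'rV[k]_(q * rho) * 'rV[k]_(q * q) -> 'M[k]_p,
    ob g (fun Z => (pid_mx rho : 'M_p) *m Z *m (pid_mx rho : 'M_p) = pid_mx rho).
Proof. by move=> e; case: p / e; apply: pid_ob. Qed.

Lemma N_ob (p q : nat) (N : 'M[k]_p) : (\rank N + q = p)%N ->
  exists g : 'rV[k]_(\rank N * q) * 'rV[k]_(q * \rank N) * 'rV[k]_(q * q) -> 'M[k]_p,
    ob g (fun Y => N *m Y *m N = N).
Proof.
move=> /pid_ob' [g og].
set L := col_ebase N; set U := row_ebase N; pose D : 'M[k]_p := pid_mx (\rank N).
have uL : L \in unitmx by apply: col_ebase_unit.
have uU : U \in unitmx by apply: row_ebase_unit.
have NE : N = L *m D *m U by rewrite /L /D /U mulmx_ebase.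
exists ((fun Z => invmx U *m Z *m invmx L) \o g).
apply: ob_compr og _ _.
  move=> Z1 Z2 /= /(can_inj (mulmxK _)).
  rewrite unitmx_inv => /(_ uL) /(can_inj (mulKmx _)).
  by rewrite unitmx_inv => /(_ uU).
move=> Y; split.
  move=> hY; exists (U *m Y *m L); split; last by rewrite !mulmxA mulVmx // mul1mx mulmxK.
  apply: (can_inj (mulKmx uL)); apply: (can_inj (mulmxK uU)) => /=.
  rewrite -[X in _ = X]NE -[N in RHS]hY [in RHS]NE !mulmxA //.
case=> Z [hZ <-].
rewrite [in RHS]NE /D -hZ [in LHS]NE !mulmxA.
by rewrite mulmxK // mulmxKV.
Qed.
End S.

Section S.
Variable k : fieldType.

Lemma blk_pow m p (C : 'M[k]_m) (N : 'M[k]_p) j :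
  (block_mx C 0 0 N : 'M_(m + p)) ^+ j = block_mx (C ^+ j) 0 0 (N ^+ j).
Proof.
elim: j => [|j IH]; first by rewrite !expr0 -!idmxE scalar_mx_block.
by rewrite !exprS IH -!mulmxE mulmx_block !mulmx0 !mul0mx !addr0 !add0r.
Qed.

Lemma B_ob (U : Type) m p (C : 'M[k]_m) (N : 'M[k]_p) r (g : U -> 'M[k]_p) :
  C \in unitmx -> N ^+ r = 0 -> (1 <= r)%N ->
  ob g (fun Y => N *m Y *m N = N) ->
  ob ((fun Y => block_mx (invmx C) 0 0 Y) \o g)
     (fun X => is_GDrazin (block_mx C 0 0 N : 'M_(m + p)) r X).
Proof.
move=> uC Nr r1 og; apply: ob_compr og _ _.
  by move=> Y1 Y2 /eq_block_mx [].
have uCr : C ^+ r \in unitmx.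
  elim: (r) => [|j IH]; first by rewrite expr0 -idmxE unitmx1.
  by rewrite exprS -mulmxE unitmx_mul uC.
move=> X; rewrite /is_GDrazin blk_pow Nr; split.
  rewrite -[X]submxK !mulmx_block !mulmx0 !mul0mx !addr0 !add0r.
  case/andP=> /eqP /eq_block_mx [h11 h12 h21 h22] /eqP /eq_block_mx [c11 c12 c21 c22].
  exists (drsubmx X); split => //.
  have -> : ursubmx X = 0.
    by rewrite -[ursubmx X](mulKmx uCr) -c12 mulmx0.
  have -> : dlsubmx X = 0.
    by rewrite -[dlsubmx X](mulmxK uCr) c21 mul0mx.
  suff -> : ulsubmx X = invmx C by [].
  have -> : ulsubmx X = invmx C *m (C *m ulsubmx X *m C) *m invmx C.
    by rewrite !mulmxA mulVmx // mul1mx mulmxK.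
  by rewrite h11 mulVmx // mul1mx.
case=> Y [hY <-].
rewrite !mulmx_block !mulmx0 !mul0mx !addr0 !add0r hY mulmxV // mul1mx.
apply/andP; split; first by rewrite !mul0mx.
suff -> : invmx C *m C ^+ r = C ^+ r *m invmx C by [].
have cC : GRing.comm (invmx C) C.
  by rewrite /GRing.comm -!mulmxE mulVmx // mulmxV.
exact: (commrX r cC).
Qed.
End S.

Section T.
Variable k : fieldType.
Lemma conj_ob (U : Type) n (P B : 'M[k]_n) r (g : U -> 'M[k]_n) :
  P \in unitmx -> ob g (fun X => is_GDrazin B r X) ->
  ob ((fun Y => invmx P *m Y *m P) \o g)
     (fun X => is_GDrazin (invmx P *m B *m P) r X).
Proof.
move=> uP og; pose cj (Y : 'M[k]_n) := invmx P *m Y *m P.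
have cjM Y Z : cj Y *m cj Z = cj (Y *m Z).
  by rewrite /cj !mulmxA mulmxK.
have cjX Y j : cj Y ^+ j = cj (Y ^+ j).
  elim: j => [|j IH]; first by rewrite !expr0 /cj -idmxE mulmx1 mulVmx.
  by rewrite !exprS IH -!mulmxE cjM.
have cji : injective cj.
  by move=> Y Z /(can_inj (mulmxK uP)) /(can_inj (mulKmx _)); rewrite unitmx_inv => /(_ uP).
have GDE Y : is_GDrazin (cj B) r (cj Y) = is_GDrazin B r Y.
  by rewrite /is_GDrazin cjX !cjM !(inj_eq cji).
apply: ob_compr og cji _ => X; split.
  move=> hX; exists (P *m X *m invmx P); split; last first.
    by rewrite /cj !mulmxA mulVmx // mul1mx mulmxKV.
  rewrite -GDE.
  suff -> : cj (P *m X *m invmx P) = X by [].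
  by rewrite /cj !mulmxA mulVmx // mul1mx mulmxKV.
by case=> Y [hY <-]; rewrite -/(cj B) -/(cj Y) GDE.
Qed.
End T.

Section S.
Variable k : fieldType.

Lemma fitting n (A : 'M[k]_n) r : \rank (A ^+ r) = \rank (A ^+ r.+1) ->
  exists m p (e : (m + p = n)%N) (Q : 'M[k]_(m + p, n)) (C : 'M[k]_m) (N : 'M[k]_p),
   [/\ row_free Q, C \in unitmx, N ^+ r = 0 & Q *m A = block_mx C 0 0 N *m Q].
Proof.
move=> hr; set R := A ^+ r.
have RA : R *m A = A *m R by rewrite mulmxE -exprSr exprS.
have sAR : (R *m A <= R)%MS by rewrite RA submxMl.
have eqRA : (R *m A == R)%MS.
  by rewrite -(mxrank_leqif_eq sAR).2 mulmxE -exprSr hr.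
have eqRj j : (R *m A ^+ j == R)%MS.
  elim: j => [|j IH]; first by rewrite expr0 -idmxE mulmx1 submx_refl.
  rewrite exprSr -mulmxE mulmxA; apply/eqmxP.
  exact: eqmx_trans (eqmxMr A (eqmxP IH)) (eqmxP eqRA).
have eqRR : (R *m R == R)%MS by apply: eqRj.
have kerRR : (kermx (R *m R) <= kermx R)%MS.
  have s : (kermx R <= kermx (R *m R))%MS.
    by apply/sub_kermxP; rewrite mulmxA mulmx_ker mul0mx.
  have : (kermx R == kermx (R *m R))%MS.
    by rewrite -(mxrank_leqif_eq s).2 !mxrank_ker (eqmx_rank eqRR).
  by case/andP.
set B1 := row_base R; set B2 := row_base (kermx R).
have cap0 : (B1 :&: B2)%MS = 0.
  apply/eqP/rowV0P => v; rewrite sub_capmx => /andP [].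
  rewrite /B1 /B2 !eq_row_base => /submxP [w ->] /sub_kermxP.
  rewrite -mulmxA => /sub_kermxP wK; apply/sub_kermxP: (submx_trans wK kerRR).
have e : (\rank R + \rank (kermx R) = n)%N.
  by rewrite mxrank_ker subnKC // rank_leq_row.
have rB1 : \rank B1 = \rank R by rewrite /B1 eq_row_base.
have rB2 : \rank B2 = \rank (kermx R) by rewrite /B2 eq_row_base.
have B2R : B2 *m R = 0 by apply/sub_kermxP; rewrite /B2 eq_row_base.
have s1 : (B1 *m A <= B1)%MS.
  rewrite /B1 eq_row_base; apply: submx_trans sAR; apply: submxMr.
  by rewrite eq_row_base.
have s2 : (B2 *m A <= B2)%MS.
  rewrite /B2 eq_row_base; apply/sub_kermxP.
  by rewrite -mulmxA -RA mulmxA B2R mul0mx.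
exists (\rank R), (\rank (kermx R)), e, (col_mx B1 B2).
exists (B1 *m A *m pinvmx B1), (B2 *m A *m pinvmx B2).
have QA : col_mx B1 B2 *m A =
   block_mx (B1 *m A *m pinvmx B1) 0 0 (B2 *m A *m pinvmx B2) *m col_mx B1 B2.
  by rewrite mul_col_mx mul_block_col !mul0mx !addr0 !add0r !mulmxKpV.
have E1 : B1 *m A = (B1 *m A *m pinvmx B1) *m B1 by rewrite mulmxKpV.
have E2 : B2 *m A = (B2 *m A *m pinvmx B2) *m B2 by rewrite mulmxKpV.
set C := B1 *m A *m pinvmx B1 in E1 QA *; set N := B2 *m A *m pinvmx B2 in E2 QA *.
split => //.
- apply/eqP; rewrite -addsmxE mxrank_disjoint_sum // rB1 rB2 //.
- rewrite -row_full_unit; apply/eqP/anti_leq; rewrite rank_leq_row /=.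
  have h : \rank (B1 *m A) = \rank R.
    by rewrite (eqmxMr A (eq_row_base R)) (eqmx_rank eqRA).
  by have := mxrankM_maxl C B1; rewrite -E1 h.
- have Ej j : B2 *m A ^+ j = N ^+ j *m B2.
    elim: j => [|j IH]; first by rewrite !expr0 -!idmxE mulmx1 mul1mx.
    by rewrite !exprSr -!mulmxE mulmxA IH -mulmxA E2 mulmxA.
  apply: (row_free_inj (row_base_free (kermx R))).
  by rewrite -/B2 -Ej B2R mul0mx.
Qed.
End S.
Unset Implicit Arguments. Set Strict Implicit.

Lemma conjX (k : fieldType) n (P B : 'M[k]_n) j : P \in unitmx ->
  (invmx P *m B *m P) ^+ j = invmx P *m B ^+ j *m P.
Proof.
move=> uP; elim: j => [|j IH]; first by rewrite !expr0 -idmxE mulmx1 mulVmx.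
by rewrite !exprS IH -!mulmxE !mulmxA mulmxK.
Qed.

Lemma rank_conj (k : fieldType) n (P B : 'M[k]_n) : P \in unitmx ->
  \rank (invmx P *m B *m P) = \rank B.
Proof.
move=> uP; rewrite mxrankMfree ?row_free_unit //.
by rewrite eqmxMfull // row_full_unit unitmx_inv.
Qed.

Lemma unitX (k : fieldType) m (C : 'M[k]_m) j : C \in unitmx -> C ^+ j \in unitmx.
Proof.
move=> uC; elim: j => [|j IH]; first by rewrite expr0 -idmxE unitmx1.
by rewrite exprS -mulmxE unitmx_mul uC.
Qed.

Theorem mainTheorem12 (k : fieldType) (n : nat) (A : 'M[k]_n) (r : nat)
  (hr : is_index A r) (hr1 : (1 <= r)%N) :
  exists f : 'rV[k]_(nu A 1 * nu A r)
             * 'rV[k]_(nu A r - nu A 1)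
             * 'rV[k]_((nu A 1 - 1) * (nu A r - nu A 1))
             -> {X : 'M[k]_n | is_GDrazin A r X},
    bijective f.
Proof.
case: hr => hr0 hrs.
have hA : \rank A <> n.
  by have := hrs 0%N hr1; rewrite expr0 expr1 -idmxE mxrank1 => H H'; apply: H; rewrite H'.
have [m [p [e [Q [C [N [fQ uC Nr QA]]]]]]] := fitting hr0.
move: A Q fQ QA hr0 hrs hA; case: n / e => A Q fQ QA hr0 hrs hA.
have uQ : Q \in unitmx by rewrite -row_free_unit.
set B := block_mx C 0 0 N : 'M[k]_(m + p) in QA *.
have AE : A = invmx Q *m B *m Q by rewrite -mulmxA -QA mulmxA mulVmx // mul1mx.
subst A.
have rB j : \rank ((invmx Q *m B *m Q) ^+ j) = (m + \rank (N ^+ j))%N.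
  by rewrite conjX // rank_conj // blk_pow rank_diag_block_mx mxrank_unit // unitX.
set rho := \rank N.
have rp : (rho <= p)%N by apply: rank_leq_row.
have hn1 : nu (invmx Q *m B *m Q) 1 = (p - rho)%N.
  by rewrite /nu rB expr1; lia.
have hnr : nu (invmx Q *m B *m Q) r = p.
  by rewrite /nu rB Nr mxrank0; lia.
have q1 : (1 <= p - rho)%N.
  move: hA; rewrite -(expr1 (invmx Q *m B *m Q)) rB expr1 -/rho; lia.
rewrite hn1 hnr.
have [g1 og1] := @N_ob k p (p - rho) N (subnKC rp).
have og2 := B_ob uC Nr hr1 og1.
have og3 := conj_ob uQ og2.
have [h hb] := @split3 k ((p - rho) * p) (p - (p - rho)) ((p - rho - 1) * (p - (p - rho)))
   (rho * (p - rho)) ((p - rho) * rho) ((p - rho) * (p - rho)) ltac:(nia).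
apply: ob_sig.
exact: ob_compl og3 hb.
Qed.
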